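(* Let $s\ge 1$, integers $0=m_0<m_1<\cdots<m_s$ and $n_0>n_1>\cdots>n_s=0$, let $\mathsf T$ be the initial segment determined by $\bm E=(y^{n_0},x^{m_1}y^{n_1},\dots,x^{m_{s-1}}y^{n_{s-1}},x^{m_s})$, and let $\mathsf S=(\{0,\dots,m_s-1\}\times\{0,\dots,n_0-1\})\setminus\mathsf T$. For $i=1,\dots,s-1$ let $h_i=2^{\mathrm{val}_2(i)}$, $\ell_i=\min(h_i,s-i)$ and $$\mathsf R_i=\{m_i,\dots,m_{i+\ell_i}-1\}\times\{n_i,\dots,n_{i-h_i}-1\}.$$ Then $i+\ell_i\le s$ and $i-h_i\ge 0$ for all $i$, the rectangles $\mathsf R_1,\dots,\mathsf R_{s-1}$ are pairwise disjoint, and their union is exactly $\mathsf S$.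
   Context: $\mathrm{val}_2(i)$ denotes the $2$-adic valuation of the positive integer $i$. The initial segment determined by a list of monomials $\bm E$ is the set of $(u,v)\in\mathbb N^2$ such that $x^uy^v$ is not in the monomial ideal generated by $\bm E$; here $\mathsf T=\{(u,v): \text{for the unique } k \text{ with } m_k\le u<m_{k+1},\ v<n_k\}$ restricted to $u<m_s$. *)

(* Defs.v *)
From mathcomp Require Import all_boot.

Set Implicit Arguments.
Unset Strict Implicit.
Unset Printing Implicit Defensive.

Definition val2 (i : nat) : nat := logn 2 i.

Definition hh (i : nat) : nat := 2 ^ val2 i.

Definition ll (s i : nat) : nat := minn (hh i) (s - i).

(* The monomial x^u y^v lies in the monomial ideal generated by
   E = (x^{m_0} y^{n_0}, ..., x^{m_s} y^{n_s}) (with m_0 = 0, n_s = 0)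
   iff it is divisible by some generator x^{m_k} y^{n_k}, k = 0..s. *)
Definition in_ideal (s : nat) (m n : nat -> nat) (u v : nat) : Prop :=
  exists k, k <= s /\ m k <= u /\ n k <= v.

Definition inT (s : nat) (m n : nat -> nat) (u v : nat) : Prop :=
  ~ in_ideal s m n u v.

Definition inS (s : nat) (m n : nat -> nat) (u v : nat) : Prop :=
  u < m s /\ v < n 0 /\ ~ inT s m n u v.

Definition inR (s : nat) (m n : nat -> nat) (i u v : nat) : Prop :=
  m i <= u < m (i + ll s i) /\ n i <= v < n (i - hh i).

(* Main.v *)
Require Import Defs.
From mathcomp Require Import all_boot.
From mathcomp Require Import zify.
From Stdlib Require Import Classical.

Lemma odd_step (j t : nat) : 2 ^ t %| j -> ~~ (2 ^ t.+1 %| j) ->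
  2 ^ t.+1 %| j - 2 ^ t /\ 2 ^ t.+1 %| j + 2 ^ t.
Proof.
move=> /dvdnP [q ->]; rewrite expnS dvdn_pmul2r ?expn_gt0 // dvdn2 negbK => oq.
have Hq := odd_double_half q; rewrite oq /= -muln2 in Hq.
set k := q./2 in Hq.
split; apply/dvdnP.
- exists k; rewrite -Hq; rewrite mulnDl mul1n addnC addnK; lia.
- exists k.+1; rewrite -Hq; rewrite mulnDl mul1n; lia.
Qed.

Lemma block_exists (b a : nat) : 1 <= b <= a ->
  exists i, [/\ b <= i <= a, i - hh i < b & a < i + hh i].
Proof.
move=> /andP [b1 ba].
pose P := fun t => [exists j : 'I_a.+1, (b <= j) && (2 ^ t %| j)].
have exP : exists t, P t.
  exists 0; apply/existsP; exists (Ordinal (ltnSn a) : 'I_a.+1) => /=.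
  by rewrite ba dvd1n.
have ubP : forall t, P t -> t <= a.
  move=> t /existsP [j /andP [bj dj]].
  have := dvdn_leq _ dj; have := ltn_ord j; have := ltn_expl t (ltnSn 1).
  move=> h1 h2 h3; have h4 := h3 (leq_trans b1 bj); lia.
case: (ex_maxnP exP ubP) => t /existsP [j /andP [bj dj]] tmax.
have j0 : 0 < j by apply: leq_trans b1 bj.
have ja : (j <= a) := ltn_ord j.
have Hv : val2 j = t.
  apply/eqP; rewrite eqn_leq; apply/andP; split.
    apply: tmax; apply/existsP; exists j; rewrite bj /=; exact: pfactor_dvdnn.
  by rewrite /val2 -pfactor_dvdn.
have nd : ~~ (2 ^ t.+1 %| j).
  apply/negP => d; suff: t.+1 <= t by rewrite ltnn. apply: tmax.
  apply/existsP; exists j; by rewrite bj.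
have [d1 d2] := @odd_step _ _ dj nd.
exists j; rewrite /hh Hv; split.
- by rewrite bj.
- rewrite ltnNge; apply/negP => h.
  suff: t.+1 <= t by rewrite ltnn. apply: tmax; apply/existsP.
  have hl : j - 2 ^ t < a.+1 by lia.
  exists (Ordinal hl); by rewrite /= h.
- rewrite ltnNge; apply/negP => h.
  suff: t.+1 <= t by rewrite ltnn. apply: tmax; apply/existsP.
  have hl : j + 2 ^ t < a.+1 by lia.
  exists (Ordinal hl); rewrite /= d2 andbT; lia.
Qed.

Lemma hh_le i : 0 < i -> hh i <= i.
Proof. move=> i0; apply: dvdn_leq => //; exact: pfactor_dvdnn. Qed.

Lemma hh_dvd i j : val2 i <= val2 j -> hh i %| j.
Proof.
move=> h; apply: dvdn_trans (dvdn_exp2l 2 h) _; exact: pfactor_dvdnn.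
Qed.

Lemma close_div d x y : d %| x -> d %| y -> x < y -> y < x + d -> False.
Proof.
move=> dx dy xy yx; have := dvdn_leq _ (dvdn_sub dy dx).
have h : 0 < y - x by lia.
move=> /(_ h); lia.
Qed.

Theorem mainTheorem3 (s : nat) (m n : nat -> nat) :
  1 <= s ->
  m 0 = 0 ->
  (forall k, k < s -> m k < m k.+1) ->
  (forall k, k < s -> n k.+1 < n k) ->
  n s = 0 ->
  [/\ (forall i, 0 < i < s -> i + ll s i <= s /\ hh i <= i),
      (forall i j u v, 0 < i < s -> 0 < j < s -> i <> j ->
          inR s m n i u v -> ~ inR s m n j u v)
    & (forall u v, inS s m n u v <-> exists2 i, 0 < i < s & inR s m n i u v)].
Proof.
move=> s1 m0 mS nS ns.
have mlt : forall x y, x < y -> y <= s -> m x < m y.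
  move=> x y; elim: y => [//|y IH] xy ys.
  have := mS y ys; rewrite ltnS leq_eqVlt in xy; case/orP: xy => [/eqP -> //|xy].
  have := IH xy (ltnW ys); lia.
have nlt : forall x y, x < y -> y <= s -> n y < n x.
  move=> x y; elim: y => [//|y IH] xy ys.
  have := nS y ys; rewrite ltnS leq_eqVlt in xy; case/orP: xy => [/eqP -> //|xy].
  have := IH xy (ltnW ys); lia.
have mle : forall x y, x <= y -> y <= s -> m x <= m y.
  move=> x y; rewrite leq_eqVlt => /orP [/eqP -> //|xy] ys.
  exact: ltnW (mlt _ _ xy ys).
have nle : forall x y, x <= y -> y <= s -> n y <= n x.
  move=> x y; rewrite leq_eqVlt => /orP [/eqP -> //|xy] ys.
  exact: ltnW (nlt _ _ xy ys).
have llh : forall i, ll s i <= hh i by move=> i; rewrite /ll geq_minl.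
have lls : forall i, ll s i <= s - i by move=> i; rewrite /ll geq_minr.
split.
- move=> i /andP [i0 iS]; split; last exact: hh_le.
  have := lls i; lia.
- move=> i j u v /andP [i0 iS] /andP [j0 jS] ij [/andP [mi ui] /andP [ni vi]]
    [/andP [mj uj] /andP [nj vj]].
  have hi := hh_le _ i0; have hj := hh_le _ j0.
  have li := llh i; have lj := llh j; have lsi := lls i; have lsj := lls j.
  have a1 : i < j + ll s j.
    rewrite ltnNge; apply/negP => h; have := mle _ _ h (ltnW iS); lia.
  have a2 : j < i + ll s i.
    rewrite ltnNge; apply/negP => h; have := mle _ _ h (ltnW jS); lia.
  have a3 : j - hh j < i.
    rewrite ltnNge; apply/negP => h; have := nle _ _ h (ltac:(lia)); lia.
  have a4 : i - hh i < j.
    rewrite ltnNge; apply/negP => h; have := nle _ _ h (ltac:(lia)); lia.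
  have dii : forall k, hh k %| k by move=> k; exact: pfactor_dvdnn.
  case: (leqP (val2 i) (val2 j)) => hv.
  + have dj := @hh_dvd _ _ hv.
    case: (ltngtP i j) => c; last by apply: ij.
    * by apply: (@close_div _ _ _ (dii i) dj c); lia.
    * by apply: (@close_div _ _ _ dj (dii i) c); lia.
  + have di := @hh_dvd _ _ (ltnW hv).
    case: (ltngtP i j) => c; last by apply: ij.
    * by apply: (@close_div _ _ _ di (dii j) c); lia.
    * by apply: (@close_div _ _ _ (dii j) di c); lia.
- move=> u v; split.
  + move=> [us [vn]]; rewrite /inT => /NNPP [k [ks [mk nk]]].
    pose Pa := fun x => (x <= s) && (m x <= u).
    have exa : exists x, Pa x by exists k; rewrite /Pa ks mk.
    have uba : forall x, Pa x -> x <= s by move=> x /andP [].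
    case: (ex_maxnP exa uba) => a /andP [a_s ma] amax.
    pose Pb := fun x => (n x <= v).
    have exb : exists x, Pb x by exists k.
    case: (ex_minnP exb) => b nb bmin.
    have ka : k <= a by apply: amax; rewrite /Pa ks mk.
    have bk : b <= k by apply: bmin.
    have as_ : a < s.
      rewrite ltnNge; apply/negP => h; have e : a = s by lia.
      move: ma; rewrite e; lia.
    have b0 : 0 < b by rewrite lt0n; apply/negP => /eqP b0; move: nb; rewrite /Pb b0; lia.
    have ua : u < m a.+1.
      rewrite ltnNge; apply/negP => h; have := amax a.+1; rewrite /Pa as_ h.
      by move=> /(_ isT); rewrite ltnn.
    have vb : v < n b.-1.
      rewrite ltnNge; apply/negP => h; have := bmin b.-1 h; lia.
    have [i [/andP [bi ia] ib ai]] := block_exists b a (ltac:(lia)).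
    exists i; first lia.
    have hi := hh_le _ (ltac:(lia) : 0 < i).
    split; apply/andP; split.
    * apply: leq_trans ma; apply: mle => //; lia.
    * apply: leq_trans ua _; apply: mle; rewrite /ll; lia.
    * apply: leq_trans _ nb; apply: nle => //; lia.
    * apply: leq_trans vb _; apply: nle; lia.
  + move=> [i /andP [i0 iS] [/andP [mi ui] /andP [ni vi]]].
    have lsi := lls i.
    split; [|split].
    * apply: leq_trans ui _; apply: mle => //; lia.
    * apply: leq_trans vi _; apply: nle => //; lia.
    * move=> H; apply: H; exists i; split; first exact: ltnW.
      by [].
Qed.
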